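(* Let $X\subseteq\mathbb R^n$ be convex and compact, let $\phi_1,\dots,\phi_m:\mathbb R^n\to\mathbb R$ be convex, let $y\in\mathbb R^n$, $\gamma>0$, and consider $$\min_{u\in X}\ \tfrac1{2\gamma}\|u-y\|^2\quad\text{s.t.}\quad\phi_i(u)\le0,\ i=1,\dots,m,$$ with optimal solution $x^*$. Let $x^\circ\in X$ be strictly feasible, i.e., $\phi_i(x^\circ)<0$ for all $i$. Let $\hat x$ be an $\epsilon$-suboptimal and $\epsilon$-infeasible solution, i.e., $\hat x\in X$, $\big|\frac1{2\gamma}\|\hat x-y\|^2-\frac1{2\gamma}\|x^*-y\|^2\big|\le\epsilon$ and $[\phi_i(\hat x)]_+\le\epsilon$ for all $i$. Let $\kappa=\max_i\frac{[\phi_i(\hat x)]_+}{[\phi_i(\hat x)]_+-\phi_i(x^\circ)}$ and $\tilde x=\kappa x^\circ+(1-\kappa)\hat x$. Then $\tilde x$ is feasible for the problem, and $\tilde x$ is an $\mathcal O(\epsilon)$-approximate solution in the sense that, with $h=\mathbb I_\Theta$ and $\Theta=\{x\in X:\phi_i(x)\le0\ \forall i\}$, $$\tfrac1{2\gamma}\|\tilde x-y\|^2+h(\tilde x)\le\rho+\min_{x\in\mathbb R^n}\Big\{\tfrac1{2\gamma}\|x-y\|^2+h(x)\Big\}\quad\text{with }\rho=\mathcal O(\epsilon).$$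
   Context: $[a]_+=\max\{0,a\}$. $\mathbb I_\Theta$ is the indicator function of $\Theta$: $\mathbb I_\Theta(x)=0$ if $x\in\Theta$ and $+\infty$ otherwise. *)

(* Defs.v *)
From HB Require Import structures.
From mathcomp Require Import all_boot all_order all_algebra.
From mathcomp Require Import all_classical all_reals all_analysis.
Set Implicit Arguments. Unset Strict Implicit. Unset Printing Implicit Defensive.
Import Order.TTheory GRing.Theory Num.Theory.
Import numFieldNormedType.Exports.
Local Open Scope classical_set_scope.
Local Open Scope ring_scope.

Definition sqdist (R : realType) (n : nat) (u y : 'rV[R]_n) : R :=
  \sum_(i < n) (u ord0 i - y ord0 i) ^+ 2.

Definition convex_fun (R : realType) (n : nat) (f : 'rV[R]_n -> R) : Prop :=
  forall x z t, 0 <= t <= 1 ->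
    f (t *: x + (1 - t) *: z) <= t * f x + (1 - t) * f z.

Definition pos_part (R : realType) (a : R) : R := Num.max 0 a.

Definition feas (R : realType) (n m : nat) (X : set 'rV[R]_n)
  (phi : 'I_m -> 'rV[R]_n -> R) : set 'rV[R]_n :=
  [set x | X x /\ forall i, phi i x <= 0].

Definition ind_Theta (R : realType) (n : nat) (Th : set 'rV[R]_n) (x : 'rV[R]_n)
  : \bar R := if x \in Th then 0%E else +oo%E.

Definition kappa (R : realType) (n m : nat) (phi : 'I_m -> 'rV[R]_n -> R)
  (xh xo : 'rV[R]_n) : R :=
  \big[Num.max/0]_(i < m)
     (pos_part (phi i xh) / (pos_part (phi i xh) - phi i xo)).

(* Main.v *)
Require Import Defs.
From HB Require Import structures.
From mathcomp Require Import all_boot all_order all_algebra.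
From mathcomp Require Import all_classical all_reals all_analysis.
From mathcomp Require Import ring lra.
Import Order.TTheory GRing.Theory Num.Theory.
Import numFieldNormedType.Exports.
Local Open Scope classical_set_scope.
Local Open Scope ring_scope.

Section Helpers.
Variable R : realType.

Lemma sq_convex (k a b c : R) : 0 <= k <= 1 ->
  (k * a + (1 - k) * b - c) ^+ 2 <= k * (a - c) ^+ 2 + (1 - k) * (b - c) ^+ 2.
Proof.
move=> /andP[k0 k1]; rewrite -subr_ge0.
have -> : k * (a - c) ^+ 2 + (1 - k) * (b - c) ^+ 2 - (k * a + (1 - k) * b - c) ^+ 2
  = k * (1 - k) * (a - b) ^+ 2 by ring.
by rewrite mulr_ge0 ?sqr_ge0 // mulr_ge0 // subr_ge0.
Qed.

Lemma sqdist_convex (n : nat) (k : R) (u v y : 'rV[R]_n) : 0 <= k <= 1 ->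
  sqdist (k *: u + (1 - k) *: v) y <= k * sqdist u y + (1 - k) * sqdist v y.
Proof.
move=> hk; rewrite /sqdist !mulr_sumr -big_split /=; apply: ler_sum => j _.
by rewrite !mxE; apply: sq_convex.
Qed.

Lemma sqdist_ge0 (n : nat) (u y : 'rV[R]_n) : 0 <= sqdist u y.
Proof. by rewrite /sqdist sumr_ge0 // => j _; rewrite sqr_ge0. Qed.
End Helpers.

Theorem lemma5 (R : realType) (n m : nat) (X : set 'rV[R]_n)
  (phi : 'I_m -> 'rV[R]_n -> R) (y : 'rV[R]_n) (gamma : R)
  (xstar xo : 'rV[R]_n) :
  convex_set X -> compact X ->
  (forall i, convex_fun (phi i)) ->
  0 < gamma ->
  feas X phi xstar ->
  (forall u, feas X phi u ->
     sqdist xstar y / (2 * gamma) <= sqdist u y / (2 * gamma)) ->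
  X xo -> (forall i, phi i xo < 0) ->
  exists C : R, 0 <= C /\
  forall (eps : R) (xh : 'rV[R]_n), 0 < eps ->
    X xh ->
    `| sqdist xh y / (2 * gamma) - sqdist xstar y / (2 * gamma) | <= eps ->
    (forall i, pos_part (phi i xh) <= eps) ->
    let k := kappa phi xh xo in
    let xt := k *: xo + (1 - k) *: xh in
    feas X phi xt /\
    ((sqdist xt y / (2 * gamma))%:E + ind_Theta (feas X phi) xt <=
      (C * eps)%:E +
      ereal_inf [set (sqdist x y / (2 * gamma))%:E + ind_Theta (feas X phi) x
                | x in [set: 'rV[R]_n]])%E.
Proof.
move=> cX _ cphi g0 fstar optstar Xo phio.
set f := fun u => sqdist u y / (2 * gamma).
have g2 : 0 < 2 * gamma by rewrite mulr_gt0.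
have f0 : forall u, 0 <= f u by move=> u; rewrite /f divr_ge0 ?sqdist_ge0 // ltW.
set M := \sum_(i < m) (- phi i xo)^-1.
have aM : forall i, (- phi i xo)^-1 <= M.
  move=> i; rewrite /M (bigD1 i) //= lerDl sumr_ge0 // => j _.
  by rewrite invr_ge0 oppr_ge0 ltW.
have M0 : 0 <= M by rewrite /M sumr_ge0 // => j _; rewrite invr_ge0 oppr_ge0 ltW.
exists (1 + f xo * M); split; first by rewrite addr_ge0 // mulr_ge0.
move=> eps xh e0 Xh habs hpos k xt.
set t := fun i => pos_part (phi i xh) / (pos_part (phi i xh) - phi i xo).
have pp0 : forall i, 0 <= pos_part (phi i xh) by move=> i; rewrite /pos_part le_max lexx.
have den0 : forall i, 0 < pos_part (phi i xh) - phi i xo.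
  by move=> i; rewrite subr_gt0 (lt_le_trans (phio i)).
have t0 : forall i, 0 <= t i by move=> i; rewrite divr_ge0 // ltW.
have t1 : forall i, t i <= 1.
  by move=> i; rewrite ler_pdivrMr // mul1r lerDl oppr_ge0 ltW.
have tk : forall i, t i <= k.
  by move=> i; rewrite /k /kappa (bigD1 i) //= le_max lexx.
have k01 : 0 <= k <= 1.
  rewrite /k /kappa; apply: (big_ind (fun x => 0 <= x <= 1)) => //.
  - by rewrite lexx ler01.
  - move=> a b /andP[a0 a1] /andP[b0 b1].
    by rewrite le_max a0 /= ge_max a1 b1.
  - by move=> i _; rewrite t0 t1.
have /andP[k0 k1] := k01.
have keps : k <= eps * M.
  rewrite /k /kappa; apply: (big_ind (fun x => x <= eps * M)) => //.
  - by rewrite mulr_ge0 // ltW.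
  - by move=> a b a1 b1; rewrite ge_max a1 b1.
  move=> i _.
  have ao : 0 < - phi i xo by rewrite oppr_gt0.
  rewrite /t; apply: (@le_trans _ _ (eps * (- phi i xo)^-1)).
    apply: ler_pM => //; first by rewrite invr_ge0 ltW.
    by rewrite lef_pV2 ?posrE // lerDr.
  by apply: ler_wpM2l => //; rewrite ltW.
have Xt : X xt.
  have := cX xo xh (Itv01 k0 k1); rewrite !inE; apply => //.
have Ft : feas X phi xt.
  split => // i.
  apply: (le_trans (cphi i xo xh k k01)).
  have [hn|hp] := leP (phi i xh) 0.
    rewrite -oppr_ge0 opprD -!mulrN addr_ge0 // mulr_ge0 //.
    + by rewrite oppr_ge0 ltW.
    + by rewrite subr_ge0.
    + by rewrite oppr_ge0.
  have ppe : pos_part (phi i xh) = phi i xh by rewrite /pos_part max_r // ltW.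
  have := tk i; rewrite /t ppe ler_pdivrMr; last by rewrite -ppe.
  move=> h.
  have -> : k * phi i xo + (1 - k) * phi i xh = phi i xh - k * (phi i xh - phi i xo) by ring.
  by rewrite subr_le0.
split => //.
have -> : ind_Theta (feas X phi) xt = 0%E by rewrite /ind_Theta mem_set.
have Hinf : ((f xstar)%:E <= ereal_inf [set (sqdist x y / (2 * gamma))%:E + ind_Theta (feas X phi) x
                | x in [set: 'rV[R]_n]])%E.
  apply: le_ereal_inf_tmp => z [x _ <-]; rewrite /ind_Theta.
  case: ifPn => [/set_mem fx|_]; last by rewrite addey // leey.
  by rewrite adde0 lee_fin optstar.
rewrite adde0; apply: le_trans (leeD (lexx _) Hinf); rewrite -EFinD lee_fin.
have fc : f xt <= k * f xo + (1 - k) * f xh.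
  rewrite /f /xt !mulrA -mulrDl ler_pM2r ?invr_gt0 //.
  exact: sqdist_convex.
have fh : f xh <= f xstar + eps.
  by rewrite -lerBlDl; apply: le_trans habs; apply: ler_norm.
have kf : k * f xo <= eps * M * f xo by apply: ler_wpM2r.
have kfh := mulr_ge0 k0 (f0 xh).
have -> : (1 + f xo * M) * eps = eps + eps * M * f xo by ring.
have e2 : (1 - k) * f xh = f xh - k * f xh by ring.
rewrite e2 in fc.
change (f xt <= eps + eps * M * f xo + f xstar); move: fc fh kf kfh; clear; move=> fc fh kf kfh; lra.
Qed.
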